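(* (1) For every class $\mathcal K$ of algebras of the same type $F$, $\mathsf V(\mathsf D(\mathcal K))=\mathsf V(\mathcal K)_\tau$. (2) Let $\mathcal K_1,\mathcal K_2$ be two classes of algebras of type $F$. Then $\mathsf V(\mathsf D(\mathcal K_1))=\mathsf V(\mathsf D(\mathcal K_2))$ if and only if $\mathsf V(\mathcal K_1)=\mathsf V(\mathcal K_2)$.
   Context: A state-morphism on an algebra $\mathbf A$ of type $F$ is an endomorphism $\tau$ of $\mathbf A$ with $\tau\circ\tau=\tau$; $(\mathbf A,\tau)$ is a state-morphism algebra (type $F$ plus one unary operation). For a variety $\mathcal V$ of type $F$, $\mathcal V_\tau$ is the variety of all state-morphism algebras $(\mathbf A,\tau)$ with $\mathbf A\in\mathcal V$. $D(\mathbf B)=(\mathbf B\times\mathbf B,\tau_B)$ with $\tau_B(x,y)=(x,x)$, and $\mathsf D(\mathcal K)=\{D(\mathbf B):\mathbf B\in\mathcal K\}$. $\mathsf V(\cdot)$ denotes the generated variety. *)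

(* Defs.v *)
From mathcomp Require Import all_boot.
Set Implicit Arguments. Unset Strict Implicit. Unset Printing Implicit Defensive.

Record signature := Signature { op : Type; arity : op -> nat }.

Record algebra (F : signature) := Algebra {
  carrier :> Type;
  interp : forall f : op F, ('I_(arity f) -> carrier) -> carrier }.
Arguments interp {F} a f _.

Definition is_hom (F : signature) (A B : algebra F) (h : A -> B) : Prop :=
  forall (f : op F) (a : 'I_(arity f) -> A), h (interp A f a) = interp B f (fun i => h (a i)).

Definition class (F : signature) := algebra F -> Prop.

Definition prod_alg (F : signature) (I : Type) (A : I -> algebra F) : algebra F :=
  @Algebra F (forall i, A i) (fun f a => fun i => interp (A i) f (fun k => a k i)).

Definition is_variety (F : signature) (C : class F) : Prop :=
  [/\ (forall (A B : algebra F) (h : A -> B),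
         C A -> is_hom h -> (forall b, exists a, h a = b) -> C B),
      (forall (A B : algebra F) (h : B -> A),
         C A -> is_hom h -> injective h -> C B) &
      (forall (I : Type) (A : I -> algebra F),
         (forall i, C (A i)) -> C (prod_alg A))].

Definition gen_variety (F : signature) (K : class F) : class F :=
  fun B => forall C : class F, is_variety C -> (forall A, K A -> C A) -> C B.

Definition sig_tau (F : signature) : signature :=
  @Signature (option (op F)) (fun o => if o is Some f then arity f else 1%N).

Definition reduct (F : signature) (B : algebra (sig_tau F)) : algebra F :=
  @Algebra F B (fun f a => interp B (Some f) a).

Definition tau_of (F : signature) (B : algebra (sig_tau F)) : reduct B -> reduct B :=
  fun x => interp B None (fun _ => x).

Definition is_state_morphism (F : signature) (A : algebra F) (t : A -> A) : Prop :=
  is_hom t /\ (forall x, t (t x) = t x).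

Definition tau_class (F : signature) (V : class F) : class (sig_tau F) :=
  fun B => V (reduct B) /\ @is_state_morphism F (reduct B) (@tau_of F B).

Definition D_alg (F : signature) (B : algebra F) : algebra (sig_tau F) :=
  @Algebra (sig_tau F) (B * B)%type
    (fun o => match o return ('I_(arity (s := sig_tau F) o) -> (B * B)%type) -> (B * B)%type with
              | Some f => fun a => (interp B f (fun i => (a i).1), interp B f (fun i => (a i).2))
              | None => fun a => ((a ord0).1, (a ord0).1)
              end).

Definition D_class (F : signature) (K : class F) : class (sig_tau F) :=
  fun B => exists A, K A /\ B = D_alg A.

(* Main.v *)
Require Import Defs.
Set Implicit Arguments.
From mathcomp Require Import all_boot.
From Stdlib Require Import FunctionalExtensionality ClassicalEpsilon.

Lemma gen_incl (G : signature) (K : class G) A : K A -> gen_variety K A.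
Proof. by move=> KA C _ KC; apply: KC. Qed.

Lemma gen_var (G : signature) (K : class G) : is_variety (gen_variety K).
Proof.
split.
- move=> A B h HA hh hs C vC KC; case: (vC) => H _ _; exact: (H A B h (HA C vC KC) hh hs).
- move=> A B h HA hh hi C vC KC; case: (vC) => _ H _; exact: (H A B h (HA C vC KC) hh hi).
- move=> I A HA C vC KC; case: (vC) => _ _ H; apply: H => i; exact: HA.
Qed.

Section S.
Variable F : signature.



Lemma surj_choice (A B : Type) (h : A -> B) :
  (forall b, exists a, h a = b) -> exists g : B -> A, forall b, h (g b) = b.
Proof.
move=> hs; exists (fun b => proj1_sig (constructive_indefinite_description _ (hs b))).
by move=> b; case: (constructive_indefinite_description _ (hs b)).
Qed.

Lemma tau_var (V : class F) : is_variety V -> is_variety (tau_class V).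
Proof.
case=> VH VS VP; split.
- move=> A B h [VA [tA tAi]] hh hs.
  have ht : forall x : A, @tau_of F B (h x) = h (@tau_of F A x).
    by move=> x; rewrite /tau_of (hh None).
  have [g hg] := @surj_choice _ _ h hs.
  split.
    apply: (VH (reduct A) (reduct B) h VA) => //.
    by move=> f a; exact: (hh (Some f) a).
  split.
    move=> f b.
    have -> : b = (fun i => h (g (b i))) by apply: functional_extensionality => i; rewrite hg.
    rewrite /= -(hh (Some f)) ht.
    rewrite (tA f) (hh (Some f)).
    congr (interp B (Some f)); apply: functional_extensionality => i.
    by rewrite ht.
  move=> x; rewrite -(hg x) !ht tAi //.
- move=> A B h [VA [tA tAi]] hh hi.
  have ht : forall x : B, h (@tau_of F B x) = @tau_of F A (h x).
    by move=> x; rewrite /tau_of (hh None).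
  split.
    apply: (VS (reduct A) (reduct B) h VA) => //.
    by move=> f a; exact: (hh (Some f) a).
  split.
    move=> f b; apply: hi.
    rewrite ht /=.
    have e1 := hh (Some f) b. rewrite /= in e1. rewrite e1.
    have e2 := tA f (fun i => h (b i)). rewrite /= in e2. rewrite e2.
    have e3 := hh (Some f) (fun i => @tau_of F B (b i)). rewrite /= in e3. rewrite e3.
    congr (interp A (Some f)); apply: functional_extensionality_dep => i.
    by rewrite ht.
  by move=> x; apply: hi; rewrite !ht tAi.
- move=> I A HA; split.
    apply: (VP I (fun i => reduct (A i))) => i; exact: (HA i).1.
  split.
    move=> f a; apply: functional_extensionality_dep => i.
    exact: ((HA i).2.1 f (fun k => a k i)).
  move=> x; apply: functional_extensionality_dep => i.
  exact: ((HA i).2.2 (x i)).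
Qed.

Lemma sq_in (V : class F) : is_variety V -> forall A, V A -> V (reduct (D_alg A)).
Proof.
case=> _ VS VP A VA.
pose h (p : reduct (D_alg A)) : prod_alg (fun _ : bool => A) := fun b => if b then p.1 else p.2.
apply: (VS _ _ h (VP bool (fun _ => A) (fun _ => VA))).
  by move=> f a; apply: functional_extensionality; case.
move=> [x y] [x' y'] e.
have e1 := f_equal (fun g => g true) e; have e2 := f_equal (fun g => g false) e.
by rewrite /h /= in e1 e2; rewrite e1 e2.
Qed.

Lemma D_in (K : class F) A : gen_variety K A -> gen_variety (D_class K) (D_alg A).
Proof.
move=> HA; apply: (HA (fun A => gen_variety (D_class K) (D_alg A))); last first.
  by move=> A' KA; apply: gen_incl; exists A'; split.
have [VH VS VP] := gen_var (D_class K).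
split.
- move=> A1 B h H1 hh hs.
  pose h2 (p : D_alg A1) : D_alg B := (h p.1, h p.2).
  apply: (VH _ _ h2 H1).
    case=> [f|] a /=; last by [].
    by rewrite /h2 /= !hh.
  have [g hg] := @surj_choice _ _ h hs.
  by move=> [x y]; exists (g x, g y); rewrite /h2 /= !hg.
- move=> A1 B h H1 hh hi.
  pose h2 (p : D_alg B) : D_alg A1 := (h p.1, h p.2).
  apply: (VS _ _ h2 H1).
    case=> [f|] a /=; last by [].
    by rewrite /h2 /= !hh.
  by move=> [x y] [x' y'] [/hi -> /hi ->].
- move=> I A1 H1.
  pose e (p : D_alg (prod_alg A1)) : prod_alg (fun i => D_alg (A1 i)) :=
    fun i => (p.1 i, p.2 i).
  apply: (VS _ _ e (VP I (fun i => D_alg (A1 i)) H1)).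
    by case.
  move=> [x y] [x' y'] E.
  have ex : x = x' by apply: functional_extensionality_dep => i;
    exact: (f_equal (fun g => (g i).1) E).
  have ey : y = y' by apply: functional_extensionality_dep => i;
    exact: (f_equal (fun g => (g i).2) E).
  by rewrite ex ey.
Qed.

Lemma part1 (K : class F) B :
  gen_variety (D_class K) B <-> tau_class (gen_variety K) B.
Proof.
split.
- move=> HB; apply: HB; first exact: tau_var (gen_var K).
  move=> A [A0 [KA ->]]; split.
    exact: (sq_in (gen_var K) _ (gen_incl _ _ KA)).
  by split.
- move=> [VB [tB tBi]].
  have [_ VS _] := gen_var (D_class K).
  pose e (x : B) : D_alg (reduct B) := (@tau_of F B x, x).
  apply: (VS _ _ e (D_in VB)).
    case=> [f|] a.
      rewrite /e /=; congr pair; exact: tB.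
    have -> : a = (fun _ => a ord0).
      apply: functional_extensionality => i.
      by rewrite (ord1 i).
    rewrite /e /=. by have := tBi (a ord0); rewrite /tau_of => ->.
  by move=> x y [].
Qed.

End S.

Theorem theorem4p3 (F : signature) :
  (forall K : class F,
     forall B : algebra (sig_tau F),
       gen_variety (D_class K) B <-> tau_class (gen_variety K) B) /\
  (forall K1 K2 : class F,
     (forall B : algebra (sig_tau F),
        gen_variety (D_class K1) B <-> gen_variety (D_class K2) B) <->
     (forall A : algebra F, gen_variety K1 A <-> gen_variety K2 A)).
Proof.
split; first exact: part1.
move=> K1 K2; split.
- move=> E.
  have half : forall K K' : class F, (forall B, gen_variety (D_class K) B -> gen_variety (D_class K') B) ->
      forall A, gen_variety K A -> gen_variety K' A.
    move=> K K' E' A HA.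
    have /E' /part1 [H2 _] := D_in HA.
    have [VH _ _] := gen_var K'.
    apply: (VH (reduct (D_alg A)) A (fun p => p.1) H2) => //.
    by move=> a; exists (a, a).
  by move=> A; split; apply: half => B; case: (E B).
- move=> E B; rewrite !part1 /tau_class; by rewrite E.
Qed.
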